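(* For any GSSE queueing system with reward $r(q)=-\sum_i q_i$ whose arrival rate vector satisfies the stability condition with some slack $\epsilon>0$, the relative value function of the MaxWeight policy satisfies: there exist constants $c_0>0$, $c_1\ge0$ such that $$V_{MW}(q)\ \ge\ -c_0\,\hat r_{\max}(q)^2-c_1=-c_0\Big(\sum_i q_i\Big)^2-c_1\qquad\text{for all states }q.$$
   Context: GSSE: $n$ job classes, state $q\in\mathbb Z_{\ge0}^n$, discrete time. Each step $v_i(t)$ class-$i$ jobs arrive (bounded, i.i.d. over time, independent across classes, mean $\lambda_i$); the policy chooses one of $m$ service options $j$, serving $w_i^j(t)$ class-$i$ jobs (bounded, i.i.d., independent, mean $\mu_i^j$); $q_i(t+1)=(q_i(t)+v_i(t)-w_i^j(t))^+$. Stability condition with slack $\epsilon$: there are $\gamma\ge0$ with $\sum_j\gamma_j=1$ and $\epsilon>0$ with $(1+\epsilon)\lambda_i\le\sum_j\gamma_j\mu_i^j$ for all $i$. MaxWeight selects $j\in\arg\max_j\sum_i q_i\mu_i^j$. Here $c_{\max}=0$, $\hat r_{\max}(q)=-\sum_i q_i$. The relative value function $V_\pi$ of a policy $\pi$ with average reward $J_\pi$ solves $J_\pi+V_\pi(q)=r(q)+\mathbb E_\pi[V_\pi(q(t+1))\mid q(t)=q]$ with $V_\pi(\vec 0)=0$, $\vec 0$ the empty state (equivalently, expected sum of $r(q(t))-J_\pi$ until first hitting $\vec 0$). It is assumed that MaxWeight induces an ergodic chain. *)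

(* Defs.v *)
From HB Require Import structures.
From mathcomp Require Import all_boot all_order all_algebra.
From mathcomp Require Import all_classical all_reals.
From mathcomp Require Import topology normedtype sequences.
Set Implicit Arguments. Unset Strict Implicit. Unset Printing Implicit Defensive.
Import Order.TTheory GRing.Theory Num.Theory numFieldNormedType.Exports.
Local Open Scope ring_scope.

(* A GSSE system with n job classes, m service options, and all arrival /
   service counts supported in {0,..,B}.
   pa i k   = P(v_i(t) = k)          (arrival pmf of class i)
   ps j i k = P(w_i^j(t) = k)        (service pmf of class i under option j)
   Arrivals/services are independent across classes and of each other, and
   i.i.d. over time, so the chain is Markov with the kernel below. *)

Definition state (n : nat) := 'I_n -> nat.

Definition is_empty (n : nat) (q : state n) : bool := [forall i, q i == 0%N].

Definition reward (R : realType) (n : nat) (q : state n) : R :=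
  - \sum_(i < n) (q i)%:R.

Definition arr_mean (R : realType) (n B : nat) (pa : 'I_n -> 'I_B.+1 -> R)
  (i : 'I_n) : R := \sum_(k < B.+1) (k : nat)%:R * pa i k.

Definition srv_mean (R : realType) (n m B : nat)
  (ps : 'I_m -> 'I_n -> 'I_B.+1 -> R) (j : 'I_m) (i : 'I_n) : R :=
  \sum_(k < B.+1) (k : nat)%:R * ps j i k.

(* one-step expectation  E[h(q(t+1)) | q(t) = q, option j],
   q_i(t+1) = (q_i + v_i - w_i^j)^+  (truncated nat subtraction) *)
Definition step_exp (R : realType) (n m B : nat)
  (pa : 'I_n -> 'I_B.+1 -> R) (ps : 'I_m -> 'I_n -> 'I_B.+1 -> R)
  (j : 'I_m) (h : state n -> R) (q : state n) : R :=
  \sum_(a : {ffun 'I_n -> 'I_B.+1}) \sum_(s : {ffun 'I_n -> 'I_B.+1})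
     ((\prod_(i < n) pa i (a i)) * (\prod_(i < n) ps j i (s i)) *
      h (fun i => (q i + a i - s i)%N)).

(* E_q[ f(q(t)) ] under the stationary policy sel *)
Fixpoint exp_at (R : realType) (n m B : nat)
  (pa : 'I_n -> 'I_B.+1 -> R) (ps : 'I_m -> 'I_n -> 'I_B.+1 -> R)
  (sel : state n -> 'I_m) (f : state n -> R) (t : nat) (q : state n) : R :=
  match t with
  | 0%N => f q
  | t'.+1 => step_exp pa ps (sel q) (exp_at pa ps sel f t') q
  end.

(* E_q[ f(q(t)) 1{sigma > t} ], sigma = inf {t >= 0 : q(t) = 0} *)
Fixpoint taboo_exp (R : realType) (n m B : nat)
  (pa : 'I_n -> 'I_B.+1 -> R) (ps : 'I_m -> 'I_n -> 'I_B.+1 -> R)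
  (sel : state n -> 'I_m) (f : state n -> R) (t : nat) (q : state n) : R :=
  if is_empty q then 0 else
  match t with
  | 0%N => f q
  | t'.+1 => step_exp pa ps (sel q) (taboo_exp pa ps sel f t') q
  end.

Definition rvf_partial (R : realType) (n m B : nat)
  (pa : 'I_n -> 'I_B.+1 -> R) (ps : 'I_m -> 'I_n -> 'I_B.+1 -> R)
  (sel : state n -> 'I_m) (J : R) (q : state n) : R ^nat :=
  series (fun t => taboo_exp pa ps sel (fun x => reward R x - J) t q).

(* relative value function V_pi(q) = E_q[ sum_{t < sigma} (r(q(t)) - J) ] *)
Definition rvf (R : realType) (n m B : nat)
  (pa : 'I_n -> 'I_B.+1 -> R) (ps : 'I_m -> 'I_n -> 'I_B.+1 -> R)
  (sel : state n -> 'I_m) (J : R) (q : state n) : R :=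
  limn (rvf_partial pa ps sel J q).

Definition maxweight (R : realType) (n m B : nat)
  (ps : 'I_m -> 'I_n -> 'I_B.+1 -> R) (sel : state n -> 'I_m) : Prop :=
  forall (q : state n) (j : 'I_m),
    \sum_(i < n) (q i)%:R * srv_mean ps j i
      <= \sum_(i < n) (q i)%:R * srv_mean ps (sel q) i.

(* Main.v *)
Require Import Defs.
From HB Require Import structures.
From mathcomp Require Import all_boot all_order all_algebra.
From mathcomp Require Import all_classical all_reals.
From mathcomp Require Import topology normedtype sequences.
From mathcomp Require Import ring lra.
Import Order.TTheory GRing.Theory Num.Theory numFieldNormedType.Exports.
Local Open Scope ring_scope.

Lemma prob_sum1 (R : realType) (n B : nat) (p : 'I_n -> 'I_B.+1 -> R)
  (p1 : forall i, \sum_(k < B.+1) p i k = 1) :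
  \sum_(a : {ffun 'I_n -> 'I_B.+1}) \prod_(i < n) p i (a i) = 1.
Proof.
rewrite -bigA_distr_bigA /=; rewrite big1 // => i _; exact: p1.
Qed.

Lemma prob_marg (R : realType) (n B : nat) (p : 'I_n -> 'I_B.+1 -> R)
  (p1 : forall i, \sum_(k < B.+1) p i k = 1) (k : 'I_n) (f : 'I_B.+1 -> R) :
  \sum_(a : {ffun 'I_n -> 'I_B.+1}) (\prod_(i < n) p i (a i)) * f (a k) =
  \sum_(c < B.+1) p k c * f c.
Proof.
have E : forall a : {ffun 'I_n -> 'I_B.+1}, (\prod_(i < n) p i (a i)) * f (a k)
   = \prod_(i < n) (p i (a i) * (if i == k then f (a i) else 1)).
  move=> a; rewrite big_split /=; congr (_ * _).
  by rewrite (bigD1 k) //= eqxx big1 ?mulr1 // => i /negbTE ->.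
rewrite (eq_bigr _ (fun a _ => E a)).
rewrite -(bigA_distr_bigA (fun i j => p i j * (if i == k then f j else 1))) /=.
rewrite (bigD1 k) //= [X in _ * X]big1 ?mulr1.
  by apply: eq_bigr => c _; rewrite eqxx.
move=> i /negbTE ->; rewrite -[RHS](p1 i); apply: eq_bigr => c _; by rewrite mulr1.
Qed.

Section S.
Context (R : realType) (n m B : nat)
  (pa : 'I_n -> 'I_B.+1 -> R) (ps : 'I_m -> 'I_n -> 'I_B.+1 -> R)
  (pa_ge0 : forall i k, 0 <= pa i k)
  (pa_sum1 : forall i, \sum_(k < B.+1) pa i k = 1)
  (ps_ge0 : forall j i k, 0 <= ps j i k)
  (ps_sum1 : forall j i, \sum_(k < B.+1) ps j i k = 1).

Lemma wa_ge0 (a : {ffun 'I_n -> 'I_B.+1}) : 0 <= \prod_(i < n) pa i (a i).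
Proof. by apply: prodr_ge0 => i _. Qed.
Lemma ws_ge0 j (a : {ffun 'I_n -> 'I_B.+1}) : 0 <= \prod_(i < n) ps j i (a i).
Proof. by apply: prodr_ge0 => i _. Qed.

Lemma step_mono j (h1 h2 : state n -> R) q :
  (forall x, h1 x <= h2 x) -> step_exp pa ps j h1 q <= step_exp pa ps j h2 q.
Proof.
move=> H; apply: ler_sum => a _; apply: ler_sum => s _.
by apply: ler_wpM2l; [apply: mulr_ge0; [apply: wa_ge0|apply: ws_ge0]|].
Qed.

Lemma step_lin j (h1 h2 : state n -> R) c1 c2 q :
  step_exp pa ps j (fun x => c1 * h1 x + c2 * h2 x) q =
  c1 * step_exp pa ps j h1 q + c2 * step_exp pa ps j h2 q.
Proof.
rewrite /step_exp !mulr_sumr -big_split; apply: eq_bigr => a _.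
rewrite !mulr_sumr -big_split; apply: eq_bigr => s _ /=.
rewrite mulrDr; congr (_ + _); rewrite mulrCA //.
Qed.

Lemma step_const j c q : step_exp pa ps j (fun _ => c) q = c.
Proof.
rewrite /step_exp.
transitivity (\sum_(a : {ffun 'I_n -> 'I_B.+1}) (\prod_(i < n) pa i (a i)) *
   ((\sum_(s : {ffun 'I_n -> 'I_B.+1}) \prod_(i < n) ps j i (s i)) * c)).
  apply: eq_bigr => a _; rewrite mulr_suml mulr_sumr; apply: eq_bigr => s _.
  by rewrite mulrA.
by rewrite prob_sum1 // mul1r -mulr_suml prob_sum1 // mul1r.
Qed.

Lemma step_sum j (h : nat -> state n -> R) T q :
  step_exp pa ps j (fun x => \sum_(t < T) h t x) q =
  \sum_(t < T) step_exp pa ps j (h t) q.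
Proof.
elim: T => [|T IH].
  rewrite big_ord0; under eq_fun do rewrite big_ord0.
  by have := step_const j 0 q.
rewrite big_ord_recr /= -IH.
under eq_fun do rewrite big_ord_recr /=.
have := step_lin j (fun x => \sum_(i < T) h i x) (h T) 1 1 q.
under eq_fun do rewrite !mul1r. by rewrite !mul1r.
Qed.


Lemma split_sum (F G : {ffun 'I_n -> 'I_B.+1} -> R) j :
  \sum_(a : {ffun 'I_n -> 'I_B.+1}) \sum_(s : {ffun 'I_n -> 'I_B.+1})
    ((\prod_(i < n) pa i (a i)) * (\prod_(i < n) ps j i (s i)) * (F a + G s))
  = \sum_(a : {ffun 'I_n -> 'I_B.+1}) (\prod_(i < n) pa i (a i)) * F a
    + \sum_(s : {ffun 'I_n -> 'I_B.+1}) (\prod_(i < n) ps j i (s i)) * G s.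
Proof.
transitivity (\sum_(a : {ffun 'I_n -> 'I_B.+1})
  ((\prod_(i < n) pa i (a i)) * F a *
     (\sum_(s : {ffun 'I_n -> 'I_B.+1}) \prod_(i < n) ps j i (s i)) +
   (\prod_(i < n) pa i (a i)) *
     \sum_(s : {ffun 'I_n -> 'I_B.+1}) (\prod_(i < n) ps j i (s i)) * G s)).
  apply: eq_bigr => a _; rewrite mulr_sumr mulr_sumr -big_split; apply: eq_bigr => s _ /=.
  ring.
rewrite big_split /= prob_sum1 //; under eq_bigr do rewrite mulr1.
by rewrite -mulr_suml prob_sum1 // mul1r.
Qed.

Lemma sq_bound (q a s b : R) : 0 <= a <= b -> 0 <= s <= b ->
  (q + a - s) ^+ 2 <= q ^+ 2 + b ^+ 2 + 2 * q * a - 2 * q * s.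
Proof. move=> /andP[a0 ab] /andP[s0 sb]. nra. Qed.

Definition V2 (x : state n) : R := \sum_(i < n) ((x i)%:R) ^+ 2.

Lemma drift_basic j (q : state n) :
  step_exp pa ps j V2 q <= \sum_(i < n) (((q i)%:R) ^+ 2 + (B%:R) ^+ 2
     + 2 * (q i)%:R * arr_mean pa i - 2 * (q i)%:R * srv_mean ps j i).
Proof.
pose F (a : {ffun 'I_n -> 'I_B.+1}) : R :=
  \sum_(i < n) (((q i)%:R) ^+ 2 + (B%:R) ^+ 2 + 2 * (q i)%:R * (a i : nat)%:R).
pose G (s : {ffun 'I_n -> 'I_B.+1}) : R :=
  \sum_(i < n) (- (2 * (q i)%:R * (s i : nat)%:R)).
apply: (@le_trans _ _ (\sum_(a : {ffun 'I_n -> 'I_B.+1}) \sum_(s : {ffun 'I_n -> 'I_B.+1})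
    ((\prod_(i < n) pa i (a i)) * (\prod_(i < n) ps j i (s i)) * (F a + G s)))).
  apply: ler_sum => a _; apply: ler_sum => s _.
  apply: ler_wpM2l; first by apply: mulr_ge0; [apply: wa_ge0|apply: ws_ge0].
  rewrite /V2 /F /G -big_split /=; apply: ler_sum => i _.
  have ha : 0 <= ((a i : nat)%:R : R) <= B%:R.
    by rewrite ler0n ler_nat -ltnS ltn_ord.
  have hs : 0 <= ((s i : nat)%:R : R) <= B%:R.
    by rewrite ler0n ler_nat -ltnS ltn_ord.
  have := @sq_bound (q i)%:R _ _ _ ha hs.
  case: (leqP (s i) (q i + a i)) => hle.
    by rewrite natrB // natrD; lra.
  move=> H; rewrite (_ : (q i + a i - s i)%N = 0%N); last by apply/eqP; rewrite subn_eq0 ltnW.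
  rewrite expr0n /=; apply: le_trans H; rewrite -natrD; apply: sqr_ge0.
rewrite split_sum /F /G.
under eq_bigr do rewrite mulr_sumr.
rewrite exchange_big /=.
under [X in _ + X]eq_bigr do rewrite mulr_sumr.
rewrite [X in _ + X]exchange_big /= -big_split /=; apply: ler_sum => i _.
rewrite (prob_marg _ _ _ _ pa_sum1 i (fun c => ((q i)%:R) ^+ 2 + (B%:R) ^+ 2 + 2 * (q i)%:R * (c : nat)%:R)).
rewrite (prob_marg _ _ _ _ (ps_sum1 j) i (fun c => - (2 * (q i)%:R * (c : nat)%:R))).
rewrite /arr_mean /srv_mean.
under eq_bigr do rewrite mulrDr.
rewrite big_split /= -mulr_suml pa_sum1 mul1r.
rewrite !mulr_sumr -sumrN.
rewrite le_eqVlt; apply/orP; left; apply/eqP.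
congr (_ + _ + _); apply: eq_bigr => c _; ring.
Qed.

End S.

Lemma mw_gap (R : realType) (n m B : nat)
  (pa : 'I_n -> 'I_B.+1 -> R) (ps : 'I_m -> 'I_n -> 'I_B.+1 -> R)
  (gamma : 'I_m -> R) (eps : R)
  (gamma_ge0 : forall j, 0 <= gamma j)
  (gamma_sum1 : \sum_(j < m) gamma j = 1)
  (eps_gt0 : 0 < eps)
  (stab : forall i, (1 + eps) * arr_mean pa i
                    <= \sum_(j < m) gamma j * srv_mean ps j i)
  (sel : state n -> 'I_m) (mw : maxweight ps sel) (smin : R)
  (smin_gt0 : 0 < smin)
  (hs : forall i, smin <= \sum_(j < m) srv_mean ps j i) (q : state n) :
  \sum_(i < n) (q i)%:R * arr_mean pa i - \sum_(i < n) (q i)%:R * srv_mean ps (sel q) i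
  <= - (eps / (1 + eps) * (smin / m%:R)) * \sum_(i < n) (q i)%:R.
Proof.
have m0 : (0 < m)%N.
  case: m gamma gamma_sum1 {gamma_ge0 stab sel mw ps hs} => // gamma.
  by rewrite big_ord0 => /eqP; rewrite eq_sym oner_eq0.
set A := \sum_(i < n) _ * arr_mean pa i.
set M := \sum_(i < n) _ * srv_mean ps (sel q) i.
set g := \sum_(i < n) (q i)%:R.
have h1 : \sum_(j < m) gamma j * (\sum_(i < n) (q i)%:R * srv_mean ps j i) <= M.
  apply: (@le_trans _ _ (\sum_(j < m) gamma j * M)).
    by apply: ler_sum => j _; apply: ler_wpM2l => //; apply: mw.
  by rewrite -mulr_suml gamma_sum1 mul1r.
have h2 : (1 + eps) * A <= \sum_(j < m) gamma j * (\sum_(i < n) (q i)%:R * srv_mean ps j i).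
  under [X in _ <= X]eq_bigr do rewrite mulr_sumr.
  rewrite exchange_big /= /A mulr_sumr; apply: ler_sum => i _.
  rewrite mulrCA; under eq_bigr do rewrite mulrCA.
  rewrite -mulr_sumr; apply: ler_wpM2l => //.
have h3 : smin * g <= m%:R * M.
  apply: (@le_trans _ _ (\sum_(j < m) \sum_(i < n) (q i)%:R * srv_mean ps j i)).
    rewrite exchange_big /= /g mulr_sumr; apply: ler_sum => i _.
    rewrite -mulr_sumr mulrC; apply: ler_wpM2l => //.
  apply: (@le_trans _ _ (\sum_(j < m) M)); first by apply: ler_sum => j _; apply: mw.
  by rewrite sumr_const card_ord mulr_natl.
have mR : 0 < (m%:R : R) by rewrite ltr0n.
have h4 : smin / m%:R * g <= M.
  by rewrite mulrAC ler_pdivrMr // [M * _]mulrC.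
have e1 : 0 < 1 + eps by lra.
have k1 : eps / (1 + eps) * (1 + eps) = eps by rewrite divfK //; lra.
have k0 : 0 <= eps / (1 + eps) by apply: divr_ge0; lra.
have h5 : eps / (1 + eps) * (smin / m%:R * g) <= eps / (1 + eps) * M.
  by apply: ler_wpM2l.
set K := eps / (1 + eps) in k1 k0 h5 *.
have k1' : K * M * (1 + eps) = eps * M by rewrite mulrAC k1.
have h6 : A - M <= - (K * M).
  rewrite -(ler_pM2r e1) mulNr k1'.
  have -> : (A - M) * (1 + eps) = (1 + eps) * A - M - eps * M by ring.
  lra.
rewrite mulNr -mulrA; lra.
Qed.

Section T.
Context (R : realType) (n m B : nat)
  (pa : 'I_n -> 'I_B.+1 -> R) (ps : 'I_m -> 'I_n -> 'I_B.+1 -> R)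
  (pa_ge0 : forall i k, 0 <= pa i k)
  (pa_sum1 : forall i, \sum_(k < B.+1) pa i k = 1)
  (ps_ge0 : forall j i k, 0 <= ps j i k)
  (ps_sum1 : forall j i, \sum_(k < B.+1) ps j i k = 1)
  (sel : state n -> 'I_m).

Lemma step_ext j (h1 h2 : state n -> R) q : (forall x, h1 x = h2 x) ->
  step_exp pa ps j h1 q = step_exp pa ps j h2 q.
Proof. by move=> H; rewrite (boolp.funext H). Qed.

Lemma taboo_lin (f1 f2 : state n -> R) c1 c2 t q :
  taboo_exp pa ps sel (fun x => c1 * f1 x + c2 * f2 x) t q =
  c1 * taboo_exp pa ps sel f1 t q + c2 * taboo_exp pa ps sel f2 t q.
Proof.
elim: t q => [|t IH] q /=; first by case: ifP => _; rewrite ?mulr0 ?addr0.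
case: ifP => _; first by rewrite !mulr0 addr0.
rewrite -step_lin; exact: step_ext.
Qed.

Let SC := @step_const R n m B pa ps pa_sum1 ps_sum1.
Let SM := @step_mono R n m B pa ps pa_ge0 ps_ge0.
Let SS := @step_sum R n m B pa ps pa_sum1 ps_sum1.
Let SL := @step_lin R n m B pa ps.

Lemma taboo_ge0 (f : state n -> R) t q : (forall x, 0 <= f x) ->
  0 <= taboo_exp pa ps sel f t q.
Proof.
move=> H; elim: t q => [|t IH] q /=; case: ifP => // _.
rewrite -(SC (sel q) 0 q); exact: SM.
Qed.

Lemma exp_at_le0 (f : state n -> R) t q : (forall x, f x <= 0) ->
  exp_at pa ps sel f t q <= 0.
Proof.
move=> H; elim: t q => [|t IH] q //=.
rewrite -(SC (sel q) 0 q); exact: SM.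
Qed.

Definition Sp (f : state n -> R) T q := \sum_(t < T) taboo_exp pa ps sel f t q.

Lemma Sp_rec f T q : Sp f T.+1 q =
  if is_empty q then 0 else f q + step_exp pa ps (sel q) (Sp f T) q.
Proof.
rewrite /Sp big_ord_recl /=.
case: ifP => E.
  by rewrite add0r big1 // => t _ /=; rewrite E.
congr (_ + _); rewrite SS; apply: eq_bigr => t _ /=; by rewrite add0n.
Qed.

Definition gg (x : state n) : R := \sum_(i < n) (x i)%:R.

Lemma gg_ge0 x : 0 <= gg x. Proof. by apply: sumr_ge0 => i _. Qed.
Lemma V2_ge0 x : 0 <= @V2 R n x. Proof. by apply: sumr_ge0 => i _; apply: sqr_ge0. Qed.

Lemma compare (eta C H : R) (eta_gt0 : 0 < eta) (C_ge0 : 0 <= C) (H_ge0 : 0 <= H)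
  (hdrift : forall q, step_exp pa ps (sel q) (@V2 R n) q <= @V2 R n q - 2 * eta * gg q + C)
  (hH : forall x T, gg x < C / eta -> Sp (fun _ => 1) T x <= H) :
  forall T q, Sp gg T q <= eta^-1 * @V2 R n q + C / eta * Order.min (Sp (fun _ => 1) T q) H.
Proof.
have D0 : 0 <= C / eta by apply: divr_ge0 => //; apply: ltW.
have S1ge0 : forall T x, 0 <= Sp (fun _ => 1) T x.
  by move=> T x; apply: sumr_ge0 => t _; apply: taboo_ge0.
have Rge0 : forall T x, 0 <= eta^-1 * @V2 R n x + C / eta * Order.min (Sp (fun _ => 1) T x) H.
  move=> T x; apply: addr_ge0; apply: mulr_ge0 => //.
  - by rewrite invr_ge0 ltW.
  - exact: V2_ge0.
  - by rewrite le_min S1ge0.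
elim=> [|T IH] q.
  by rewrite /Sp big_ord0; apply: Rge0.
have HR := Rge0 T.+1 q.
rewrite Sp_rec; case: ifP => E //.
have {HR} -> : Sp (fun _ => 1) T.+1 q = 1 + step_exp pa ps (sel q) (Sp (fun _ => 1) T) q.
  by rewrite Sp_rec E.
set D := C / eta.
set w := fun x => Order.min (Sp (fun _ => 1) T x) H.
have h1 : step_exp pa ps (sel q) (Sp gg T) q <=
   eta^-1 * step_exp pa ps (sel q) (@V2 R n) q + D * step_exp pa ps (sel q) w q.
  rewrite -SL; exact: SM.
have h2 : step_exp pa ps (sel q) w q <= H.
  rewrite -[X in _ <= X](SC (sel q) H q); apply: SM => x; rewrite ge_min lexx orbT //.
have h3 : step_exp pa ps (sel q) w q <= step_exp pa ps (sel q) (Sp (fun _ => 1) T) q.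
  apply: SM => x; rewrite ge_min lexx //.
have h4 : eta^-1 * step_exp pa ps (sel q) (@V2 R n) q <= eta^-1 * @V2 R n q - 2 * gg q + D.
  have ei : 0 <= eta^-1 by rewrite invr_ge0 ltW.
  apply: le_trans (ler_wpM2l ei (hdrift q)) _.
  rewrite !mulrDr mulrN /D.
  have -> : eta^-1 * (2 * eta * gg q) = 2 * gg q.
    by field; rewrite gt_eqF.
  by rewrite [C / _]mulrC.
set P1 := step_exp pa ps (sel q) (Sp (fun _ => 1) T) q in h3 *.
set W := step_exp pa ps (sel q) w q in h1 h2 h3.
have gq := gg_ge0 q.
case: (leP (1 + P1) H) => hle.
  have : D * W <= D * P1 by apply: ler_wpM2l.
  lra.

have hg : D <= gg q.
  rewrite leNgt; apply/negP => /(hH q T.+1); rewrite Sp_rec E => H'; move: H'; rewrite -/P1 => H'; lra.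
have : D * W <= D * H by apply: ler_wpM2l.
lra.
Qed.

End T.

Section U.
Context (R : realType) (n m B : nat)
  (pa : 'I_n -> 'I_B.+1 -> R) (ps : 'I_m -> 'I_n -> 'I_B.+1 -> R)
  (pa_ge0 : forall i k, 0 <= pa i k)
  (pa_sum1 : forall i, \sum_(k < B.+1) pa i k = 1)
  (ps_ge0 : forall j i k, 0 <= ps j i k)
  (ps_sum1 : forall j i, \sum_(k < B.+1) ps j i k = 1)
  (sel : state n -> 'I_m).

Let SC := @step_const R n m B pa ps pa_sum1 ps_sum1.

Lemma nonempty_of (q : state n) i : (0 < q i)%N -> is_empty q = false.
Proof.
move=> h; apply/negbTE/negP => /forallP /(_ i) /eqP h0; by rewrite h0 in h.
Qed.

Lemma noserve_taboo i (hps : forall j c, c != ord0 -> ps j i c = 0) t (q : state n) :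
  (0 < q i)%N -> taboo_exp pa ps sel (fun _ => 1) t q = 1.
Proof.
elim: t q => [|t IH] q hq /=; rewrite (nonempty_of q i hq) //.
rewrite -[RHS](SC (sel q) 1 q); rewrite /step_exp.
apply: eq_bigr => a _; apply: eq_bigr => s _.
case: (eqVneq (s i) ord0) => hs.
  rewrite IH //= hs subn0; exact: leq_trans hq (leq_addr _ _).
rewrite [\prod_(k < n) ps _ _ _](bigD1 i) //= hps // mul0r !mulr0 !mul0r //.
Qed.

Lemma bound_seq (N : nat) (P : (state n) -> R -> Prop)
  (Pmono : forall x H H', H <= H' -> P x H -> P x H')
  (Pex : forall x, exists H, P x H) :
  forall s : seq {ffun 'I_n -> 'I_N.+1},
  exists H, 0 <= H /\ forall f, f \in s -> P (fun i => (f i : nat)) H.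
Proof.
elim=> [|f s [H [H0 IH]]]; first by exists 0; split.
have [Hf hf] := Pex (fun i => (f i : nat)).
exists (Num.max H Hf); split; first by rewrite le_max H0.
move=> g; rewrite in_cons => /orP [/eqP -> | gs].
  by apply: Pmono hf; rewrite le_max lexx orbT.
by apply: Pmono (IH g gs); rewrite le_max lexx.
Qed.

End U.

Lemma pos_lb (R : realType) (n : nat) (c : 'I_n -> R) : (forall i, 0 < c i) ->
  exists e : R, 0 < e /\ forall i, e <= c i.
Proof.
move=> hc; exists (1 / (1 + \sum_(i < n) (c i)^-1)).
have S0 : 0 <= \sum_(i < n) (c i)^-1 by apply: sumr_ge0 => i _; rewrite invr_ge0 ltW.
split; first by apply: divr_gt0 => //; lra.
move=> i; rewrite ler_pdivrMr; last by lra.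
have : (c i)^-1 <= \sum_(k < n) (c k)^-1.
  rewrite (bigD1 i) //= lerDl; apply: sumr_ge0 => k _; rewrite invr_ge0 ltW //.
move=> h; rewrite -[X in X <= _](mulfV (negbT (gt_eqF (hc i)))); apply: ler_wpM2l; [exact: ltW|lra].
Qed.

Lemma V2_le (R : realType) (n : nat) (x : state n) : V2 R n x <= (gg R n x) ^+ 2.
Proof.
rewrite /V2 /gg expr2 mulr_suml; apply: ler_sum => i _.
rewrite expr2; apply: ler_wpM2l => //.
rewrite (bigD1 i) //= lerDl; apply: sumr_ge0 => k _ //.
Qed.
Theorem mainTheorem9 (R : realType) (n m B : nat)
  (pa : 'I_n -> 'I_B.+1 -> R) (ps : 'I_m -> 'I_n -> 'I_B.+1 -> R)
  (pa_ge0 : forall i k, 0 <= pa i k)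
  (pa_sum1 : forall i, \sum_(k < B.+1) pa i k = 1)
  (ps_ge0 : forall j i k, 0 <= ps j i k)
  (ps_sum1 : forall j i, \sum_(k < B.+1) ps j i k = 1)
  (* stability condition with slack eps *)
  (gamma : 'I_m -> R) (eps : R)
  (gamma_ge0 : forall j, 0 <= gamma j)
  (gamma_sum1 : \sum_(j < m) gamma j = 1)
  (eps_gt0 : 0 < eps)
  (stab : forall i, (1 + eps) * arr_mean pa i
                    <= \sum_(j < m) gamma j * srv_mean ps j i)
  (* a MaxWeight policy *)
  (sel : state n -> 'I_m) (mw : maxweight ps sel)
  (* ergodicity: the empty state is hit with finite expected time *)
  (erg : forall q : state n,
     cvgn (series (fun t => taboo_exp pa ps sel (fun _ => 1) t q)))
  (* J is the (long-run) average reward of MaxWeight *)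
  (J : R)
  (hJ : ((fun T : nat =>
          (\sum_(t < T.+1) exp_at pa ps sel (@reward R n) t
                              (fun _ : 'I_n => 0%N)) / (T.+1)%:R)
        @ \oo --> J)%classic) :
  exists c0 c1 : R, 0 < c0 /\ 0 <= c1 /\
    forall q : state n,
      cvgn (rvf_partial pa ps sel J q) /\
      - c0 * (\sum_(i < n) (q i)%:R) ^+ 2 - c1 <= rvf pa ps sel J q.
Proof.
pose S1 := Sp R n m B pa ps sel (fun _ => 1).
pose Sg := Sp R n m B pa ps sel (gg R n).
have S1E : forall q, series (fun t => taboo_exp pa ps sel (fun _ => 1) t q) = S1^~ q.
  by move=> q; rewrite seriesEord.
have S1ub : forall q, exists M, forall T, S1 T q <= M.
  move=> q; have := erg q; rewrite S1E => /cvg_has_ub [M hM]; exists M => T.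
  apply: le_trans (ler_norm _) _; apply: hM; by exists T.
have S1ge0 : forall T q, 0 <= S1 T q.
  by move=> T q; apply: sumr_ge0 => t _; apply: taboo_ge0.
have J0 : J <= 0.
  rewrite -(cvg_lim (@Rhausdorff R) hJ).
  apply: limr_le; first by apply/cvg_ex; exists J.
  apply: nearW => T; apply: mulr_le0_ge0; last by rewrite invr_ge0 ler0n.
  apply: sumr_le0 => t _; apply: exp_at_le0 => // x.
  by rewrite /reward oppr_le0; apply: sumr_ge0.
have [hall|hnot] := boolP [forall i, 0 < \sum_(j < m) srv_mean ps j i]; last first.
  exfalso; move/forallPn: hnot => [i]; rewrite -leNgt => hle.
  have hm0 : forall j, 0 <= srv_mean ps j i.
    by move=> j; apply: sumr_ge0 => k _; apply: mulr_ge0.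
  have hs0 : \sum_(j < m) srv_mean ps j i = 0.
    by apply/eqP; rewrite eq_le hle sumr_ge0.
  have hps : forall j c, c != ord0 -> ps j i c = 0.
    move=> j c hc.
    have h1 : srv_mean ps j i = 0 := psumr_eq0P (fun j _ => hm0 j) hs0 (isT : predT j).
    have h2 : (c : nat)%:R * ps j i c = 0 :=
      psumr_eq0P (fun (k : 'I_B.+1) _ => mulr_ge0 (ler0n R k) (ps_ge0 j i k)) h1 (isT : predT c).
    move/eqP: h2; rewrite mulf_eq0 pnatr_eq0 => /orP [hc0|/eqP //].
    by move: hc; rewrite -(inj_eq val_inj) /= hc0.
  pose q0 : state n := fun k => if k == i then 1%N else 0%N.
  have hq0 : (0 < q0 i)%N by rewrite /q0 eqxx.
  have [M hM] := S1ub q0.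
  have hT : forall T, S1 T q0 = T%:R.
    move=> T; rewrite /S1 /Sp (eq_bigr (fun _ => 1)).
      by rewrite sumr_const card_ord.
    move=> t _; exact: noserve_taboo hq0.
  have := hM (Num.truncn M).+1; rewrite hT; have := truncnS_gt M; lra.
have [smin [smin0 hsmin]] := pos_lb R n (fun i => \sum_(j < m) srv_mean ps j i)
   (fun i => (forallP hall) i).
have m0 : (0 < m)%N.
  case: m gamma gamma_sum1 {gamma_ge0 stab sel mw ps ps_ge0 ps_sum1 erg hJ S1 Sg S1E S1ub S1ge0 hall hsmin} => // gamma.
  by rewrite big_ord0 => /eqP; rewrite eq_sym oner_eq0.
set eta := eps / (1 + eps) * (smin / m%:R).
have eta0 : 0 < eta.
  apply: mulr_gt0; apply: divr_gt0 => //; [lra| by rewrite ltr0n].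
set C : R := n%:R * (B%:R) ^+ 2.
have C0 : 0 <= C by apply: mulr_ge0 => //; apply: sqr_ge0.
have hdrift : forall q, step_exp pa ps (sel q) (V2 R n) q <= V2 R n q - 2 * eta * gg R n q + C.
  move=> q; apply: le_trans (drift_basic _ _ _ _ _ _ pa_ge0 pa_sum1 ps_ge0 ps_sum1 (sel q) q) _.
  have := mw_gap _ _ _ _ _ _ _ _ gamma_ge0 gamma_sum1 eps_gt0 stab _ mw _ smin0 hsmin q.
  rewrite -/eta.
  set A := \sum_(i < n) _ * arr_mean pa i.
  set M := \sum_(i < n) _ * srv_mean ps (sel q) i.
  have -> : \sum_(i < n) (((q i)%:R) ^+ 2 + (B%:R) ^+ 2
     + 2 * (q i)%:R * arr_mean pa i - 2 * (q i)%:R * srv_mean ps (sel q) i)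
     = V2 R n q + C + 2 * A - 2 * M.
    rewrite sumrB !big_split /= /V2 /C /A /M !mulr_sumr sumr_const card_ord mulr_natl.
    by congr (_ + _ + _ - _); apply: eq_bigr => i _; ring.
  rewrite /gg; lra.
set D := C / eta.
set N := Num.truncn D.
have [H [H0 hHf]] := bound_seq R n N (fun x H => forall T, S1 T x <= H)
   (fun x H H' hle hx T => le_trans (hx T) hle) S1ub (enum {: {ffun 'I_n -> 'I_N.+1}}).
have hH : forall x T, gg R n x < D -> S1 T x <= H.
  move=> x T hx.
  pose f : {ffun 'I_n -> 'I_N.+1} := [ffun i => inord (x i)].
  have -> : x = (fun i => (f i : nat)).
    apply: boolp.funext => i; rewrite /f ffunE inordK //.
    have : ((x i)%:R : R) < (N.+1)%:R.
      apply: le_lt_trans (truncnS_gt D); apply: le_trans (ltW hx).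
      rewrite /gg (bigD1 i) //= lerDl; apply: sumr_ge0 => k _ //.
    by rewrite ltr_nat.
  by apply: hHf; rewrite mem_enum.
have cmp := compare _ _ _ _ _ _ pa_ge0 pa_sum1 ps_ge0 ps_sum1 _ _ _ _ eta0 C0 H0 hdrift hH.
have D0 : 0 <= D by apply: divr_ge0 => //; apply: ltW.
exists eta^-1, (D * H); split; first by rewrite invr_gt0.
split; first exact: mulr_ge0.
move=> q.
have bnd : forall T, Sg T q <= eta^-1 * gg R n q ^+ 2 + D * H.
  move=> T; apply: le_trans (cmp T q) _; apply: lerD.
    by apply: ler_wpM2l; [rewrite invr_ge0 ltW|apply: V2_le].
  by apply: ler_wpM2l => //; rewrite ge_min lexx orbT.
have rvfE : rvf_partial pa ps sel J q = (fun T => - Sg T q + (- J) * S1 T q).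
  rewrite /rvf_partial seriesEord; apply: boolp.funext => T /=.
  rewrite /Sg /S1 /Sp mulr_sumr -sumrN -big_split; apply: eq_bigr => t _ /=.
  have := taboo_lin _ _ _ _ pa ps sel (gg R n) (fun _ => 1) (-1) (-J) t q.
  have Ef : (fun x => -1 * gg R n x + - J * 1) = (fun x => reward R x - J).
    by apply: boolp.funext => x; rewrite /reward /gg; ring.
  rewrite Ef => ->; ring.
have cSg : cvgn (Sg^~ q).
  apply: nondecreasing_is_cvgn.
    apply/nondecreasing_seqP => T; rewrite /Sg /Sp big_ord_recr /= lerDl.
    by apply: taboo_ge0 => // x; apply: gg_ge0.
  by exists (eta^-1 * gg R n q ^+ 2 + D * H) => _ [T _ <-]; exact: bnd.
have cS1 : cvgn (S1^~ q) by rewrite -S1E; exact: erg.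
have cv : cvgn (rvf_partial pa ps sel J q).
  rewrite rvfE; apply: is_cvgD; first exact: is_cvgN.
  exact: (is_cvgMl_tmp (a:=-J) cS1).
split => //.
change (\sum_(i < n) (q i)%:R) with (gg R n q).
rewrite /rvf; apply: limr_ge => //; apply: nearW => T.
rewrite rvfE /=.
have : 0 <= - J * S1 T q by apply: mulr_ge0 => //; rewrite oppr_ge0.
move=> h1; have := bnd T; rewrite mulNr; lra.
Qed.
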